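(* Let $X_1,X_2,\dots$ be i.i.d. from an unknown law $P_0$ on $\mathbb{R}^p$. For a variational parameter $\phi$ in a parameter set $\Phi$, define the observable law $$P_\phi(x)=\iint P(x\mid z;\theta)\,\pi_Z(z)\,q_\phi(\theta)\,dz\,d\theta,$$ the profiled criterion $$m(x;\phi)=\sup_{z\in\mathbb{R}^{d_z}}\Big\{\mathbb{E}_{q_\phi(\theta)}[\log P(x\mid z;\theta)]+\log\pi_Z(z)\Big\},$$ the population objective $\widetilde{\mathcal{J}}(\phi)=\mathbb{E}_{P_0}[m(X;\phi)]-\mathrm{KL}(q_\phi\|\pi_\theta)$ and the empirical objective $\widetilde{\mathcal{J}}_N(\phi)=\frac1N\sum_{i=1}^N m(X_i;\phi)-\mathrm{KL}(q_\phi\|\pi_\theta)$. Let $\Phi^\star=\arg\max_{\phi\in\Phi}\widetilde{\mathcal{J}}(\phi)$, and assume all $\phi\in\Phi^\star$ induce the same observable law, denoted $P^\star$. Let $\Phi_1\subseteq\Phi_2\subseteq\cdots\subseteq\Phi$ be a sieve with $\bigcup_N\Phi_N$ dense in $\Phi$, and let $\hat\phi_N\in\Phi_N$ be the fitted parameter at sample size $N$, with algorithmic suboptimality $\delta_N^{\mathrm{alg}}=\sup_{\phi\in\Phi_N}\widetilde{\mathcal{J}}_N(\phi)-\widetilde{\mathcal{J}}_N(\hat\phi_N)$. Let $d$ be the bounded-Lipschitz distance $$d(P,Q)=\sup_{\|f\|_\infty\le1,\ \mathrm{Lip}(f)\le1}\Big|\int f\,dP-\int f\,dQ\Big|.$$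 Assume: (i) $\omega_N:=\sup_{\phi\in\Phi_N}|\widetilde{\mathcal{J}}_N(\phi)-\widetilde{\mathcal{J}}(\phi)|\to0$ in probability; (ii) $\delta_N^{\mathrm{alg}}\to0$ in probability; (iii) $r_N:=\sup_{\phi\in\Phi}\widetilde{\mathcal{J}}(\phi)-\sup_{\phi\in\Phi_N}\widetilde{\mathcal{J}}(\phi)\to0$; (iv) for every $\varepsilon>0$, $\Delta(\varepsilon):=\sup_{\phi\in\Phi}\widetilde{\mathcal{J}}(\phi)-\sup_{\phi:\,d(P_\phi,P^\star)\ge\varepsilon}\widetilde{\mathcal{J}}(\phi)>0$. Then $d(P_{\hat\phi_N},P^\star)\to0$ in probability. In particular, if the model is well specified, i.e. $P^\star=P_0$, then $d(P_{\hat\phi_N},P_0)\to0$ in probability.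
   Context: $\pi_Z$ is the standard Gaussian prior on $\mathbb{R}^{d_z}$; $\pi_\theta$ is a Gaussian prior on the parameters $\theta$ of a neural network that outputs a mean vector $\mu(z)$ and diagonal variances $\sigma_1^2(z),\dots,\sigma_p^2(z)$; $P(x\mid z;\theta)=\mathcal{N}(\mu(z),\mathrm{diag}(\sigma_1^2(z),\dots,\sigma_p^2(z)))$; $q_\phi(\theta)=\mathcal{N}(\theta\mid\mu_\phi,\mathrm{diag}(\sigma_\phi^2))$ is a Gaussian variational distribution with parameters $\phi=(\mu_\phi,\sigma_\phi^2)$. The sieve sets $\Phi_N$ restrict weight norms and spectral norms and enforce a floor and ceiling on the variances. *)

(* Defs.v *)
From HB Require Import structures.
From mathcomp Require Import all_boot all_order all_algebra.
From mathcomp Require Import all_classical all_reals all_analysis.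
Set Implicit Arguments. Unset Strict Implicit. Unset Printing Implicit Defensive.
Import Order.TTheory GRing.Theory Num.Theory numFieldNormedType.Exports.
Local Open Scope classical_set_scope.
Local Open Scope ring_scope.

(* Observation space R^p, represented as p-tuples of reals with the product
   (= Borel) sigma-algebra. *)
Notation obs R p := (p.-tuple R).

Definition eucl_dist {R : realType} {p : nat} (x y : obs R p) : R :=
  Num.sqrt (\sum_(i < p) (tnth x i - tnth y i) ^+ 2).

Definition BL1 {R : realType} {p : nat} (f : obs R p -> R) : Prop :=
  (forall x, `|f x| <= 1) /\ (forall x y, `|f x - f y| <= eucl_dist x y).

Definition bl_dist {R : realType} {p : nat}
    (P Q : probability (obs R p) R) : \bar R :=
  ereal_sup [set `| (\int[P]_x (f x)%:E - \int[Q]_x (f x)%:E)%E |%E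
            | f in [set f : obs R p -> R | BL1 f]].

Definition outer_prob {d} {Om : measurableType d} {R : realType}
    (P : probability Om R) (B : set Om) : \bar R :=
  ereal_inf [set P A | A in [set A | measurable A /\ B `<=` A]].

Definition cvg_in_prob0 {d} {Om : measurableType d} {R : realType}
    (P : probability Om R) (Y : nat -> Om -> \bar R) : Prop :=
  forall eps : R, 0 < eps ->
    (fun N => outer_prob P [set w | (eps%:E < `|Y N w|)%E]) @ \oo --> 0%E.

Definition iid {d} {Om : measurableType d} {R : realType} {p : nat}
    (P : probability Om R) (X : nat -> Om -> obs R p)
    (P0 : probability (obs R p) R) : Prop :=
  (forall i, measurable_fun setT (X i)) /\
  (forall i A, measurable A -> P (X i @^-1` A) = P0 A) /\
  (forall (I : seq nat) (A : nat -> set (obs R p)), uniq I ->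
     (forall i, measurable (A i)) ->
     P (\bigcap_(i in [set i | i \in I]) (X i @^-1` A i)) =
     (\prod_(i <- I) P (X i @^-1` A i))%E).

Definition Jpop {R : realType} {p : nat} {Par : Type}
    (P0 : probability (obs R p) R) (m : obs R p -> Par -> \bar R)
    (KL : Par -> R) (phi : Par) : \bar R :=
  (\int[P0]_x m x phi - (KL phi)%:E)%E.

Definition Jemp {R : realType} {p : nat} {Par : Type} {Om : Type}
    (X : nat -> Om -> obs R p) (m : obs R p -> Par -> \bar R)
    (KL : Par -> R) (N : nat) (w : Om) (phi : Par) : \bar R :=
  ((N%:R^-1)%:E * (\sum_(i < N) m (X i w) phi) - (KL phi)%:E)%E.

(* Main.v *)
Require Import Defs.
From HB Require Import structures.
From mathcomp Require Import all_boot all_order all_algebra.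
From mathcomp Require Import all_classical all_reals all_analysis.
Import Order.TTheory GRing.Theory Num.Theory numFieldNormedType.Exports.
Local Open Scope classical_set_scope.
Local Open Scope ring_scope.

From mathcomp Require Import lra.
Local Open Scope ereal_scope.
Section OP.
Context {d} {Om : measurableType d} {R : realType} (P : probability Om R).

Lemma outer_ge0 B : 0 <= outer_prob P B.
Proof. by apply: le_ereal_inf_tmp => _ [A [mA _] <-]; exact: measure_ge0. Qed.

Lemma outer_le1 B : outer_prob P B <= 1.
Proof.
apply: (@le_trans _ _ (P setT)); last by rewrite probability_setT.
by apply: ereal_inf_lbound; exists setT.
Qed.

Lemma outer_fin B : outer_prob P B \is a fin_num.
Proof.
by rewrite ge0_fin_numE ?outer_ge0 // (le_lt_trans (outer_le1 B)) // ltry.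
Qed.

Lemma outer_sub E A B : E `<=` A `|` B ->
  outer_prob P E <= outer_prob P A + outer_prob P B.
Proof.
move=> EAB; apply/lee_addgt0Pr => e e0.
have e20 : (0 < e / 2)%R by rewrite divr_gt0.
have [_ [A' [mA' AA'] <-] hA] := lb_ereal_inf_adherent e20 (outer_fin A).
have [_ [B' [mB' BB'] <-] hB] := lb_ereal_inf_adherent e20 (outer_fin B).
apply: (@le_trans _ _ (P (A' `|` B'))).
  apply: ereal_inf_lbound; exists (A' `|` B') => //; split.
    exact: measurableU.
  by move=> x /EAB [/AA'|/BB']; [left|right].
apply: (le_trans (measureU2 _ mA' mB')).
have -> : e%:E = (e / 2)%:E + (e / 2)%:E by rewrite -EFinD -splitr.
rewrite addeACA; apply: leeD; exact: ltW.
Qed.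

Lemma outer_le E F : E `<=` F -> outer_prob P E <= outer_prob P F.
Proof.
move=> EF; apply: le_ereal_inf_tmp => _ [A [mA FA] <-].
by apply: ereal_inf_lbound; exists A => //; split => //; apply: subset_trans FA.
Qed.
End OP.
Lemma absB_le {R : realType} {x y : \bar R} {e : R} : `|x - y| <= e%:E ->
  exists a b, x = a%:E /\ y = b%:E /\ (`|a - b| <= e)%R.
Proof.
case: x => [a||]; case: y => [b||] //=; rewrite ?leye_eq //.
by move=> h; exists a, b; split=> //; split=> //; rewrite -lee_fin.
Qed.

Lemma key {R : realType} {T : Type} (S : set T) (J JN : T -> \bar R) (ph : T) (s eta : R) :
  S ph ->
  ereal_sup [set `|JN f - J f| | f in S] <= eta%:E ->
  `|ereal_sup (JN @` S) - JN ph| <= eta%:E ->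
  (s - eta)%:E <= ereal_sup (J @` S) ->
  (s - 4 * eta)%:E <= J ph.
Proof.
move=> Sph H1 H2 H3.
have Hf f : S f -> `|JN f - J f| <= eta%:E.
  by move=> Sf; apply: le_trans H1; apply: ereal_sup_ubound; exists f.
have [a [b [Ea [Eb hab]]]] := absB_le (Hf _ Sph).
have [c [a' [Ec [Ea' hca]]]] := absB_le H2.
rewrite Ea in Ea'; case: Ea' => Ea'; subst a'.
have H4 : ereal_sup (J @` S) <= (c + eta)%:E.
  apply: ge_ereal_sup => _ [f Sf <-].
  have [a1 [b1 [Ea1 [Eb1 h1]]]] := absB_le (Hf _ Sf).
  have : JN f <= c%:E by rewrite -Ec; apply: ereal_sup_ubound; exists f.
  rewrite Ea1 Eb1 !lee_fin => hc.
  move: h1; rewrite ler_norml => /andP[h1 h2].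
  lra.
move: (le_trans H3 H4); rewrite Eb !lee_fin => h.
move: hab hca; rewrite !ler_norml => /andP[? ?] /andP[? ?]; lra.
Qed.

Lemma bl_dist_ge0 {R : realType} {p : nat} (Q1 Q2 : probability (obs R p) R) :
  0 <= bl_dist Q1 Q2.
Proof.
apply: le_trans (abse_ge0 (\int[Q1]_x (0:R)%:E - \int[Q2]_x (0:R)%:E)) _.
apply: ereal_sup_ubound; exists (fun _ => 0%R) => //; split => x.
  by rewrite normr0.
by move=> y; rewrite subrr normr0 /eucl_dist sqrtr_ge0.
Qed.

Lemma bl_dist_congr {R : realType} {p : nat} (Q Q1 Q2 : probability (obs R p) R) :
  (forall A, measurable A -> Q1 A = Q2 A) -> bl_dist Q Q1 = bl_dist Q Q2.
Proof.
move=> h; rewrite /bl_dist; congr ereal_sup; apply/funext => y; apply/propext.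
split=> -[f Hf <-]; exists f => //; congr (`| _ - _ |)%E;
  apply: eq_measure_integral => A mA _; first [exact: h A mA | exact: (esym (h A mA))].
Qed.

Local Close Scope ereal_scope.

Theorem theorem3
  (R : realType) (p dtheta : nat)
  (* probability space carrying the data *)
  (d0 : measure_display) (Om : measurableType d0) (P : probability Om R)
  (* unknown data law and i.i.d. sample *)
  (P0 : probability (obs R p) R) (X : nat -> Om -> obs R p)
  (* variational parameters phi = (mu_phi, sigma_phi^2) *)
  (Phi : set ('rV[R]_dtheta * 'rV[R]_dtheta))
  (* observable law P_phi, profiled criterion m(x;phi), KL(q_phi || pi_theta) *)
  (Pobs : 'rV[R]_dtheta * 'rV[R]_dtheta -> probability (obs R p) R)
  (m : obs R p -> 'rV[R]_dtheta * 'rV[R]_dtheta -> \bar R)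
  (KL : 'rV[R]_dtheta * 'rV[R]_dtheta -> R)
  (Pstar : probability (obs R p) R)
  (PhiN : nat -> set ('rV[R]_dtheta * 'rV[R]_dtheta))
  (phihat : nat -> Om -> 'rV[R]_dtheta * 'rV[R]_dtheta) :
  iid P X P0 ->
  (forall phi, Phi phi -> forall j, 0 < phi.2 ord0 j) ->
  (* all maximizers of the population objective induce the same law P* *)
  (forall phi, Phi phi ->
     Jpop P0 m KL phi = ereal_sup (Jpop P0 m KL @` Phi) ->
     forall A, measurable A -> Pobs phi A = Pstar A) ->
  (* sieve *)
  (forall N, PhiN N `<=` PhiN N.+1) ->
  (forall N, PhiN N `<=` Phi) ->
  Phi `<=` closure (\bigcup_N PhiN N) ->
  (forall N w, PhiN N (phihat N w)) ->
  (* (i) uniform deviation *)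
  cvg_in_prob0 P (fun N w =>
     ereal_sup [set `|(Jemp X m KL N w phi - Jpop P0 m KL phi)%E|%E
               | phi in PhiN N]) ->
  (* (ii) algorithmic suboptimality *)
  cvg_in_prob0 P (fun N w =>
     (ereal_sup (Jemp X m KL N w @` PhiN N) - Jemp X m KL N w (phihat N w))%E) ->
  (* (iii) sieve approximation error *)
  (fun N => (ereal_sup (Jpop P0 m KL @` Phi)
             - ereal_sup (Jpop P0 m KL @` PhiN N))%E) @ \oo --> 0%E ->
  (* (iv) well-separated maximum *)
  (forall eps : R, 0 < eps ->
     (0 < ereal_sup (Jpop P0 m KL @` Phi)
          - ereal_sup (Jpop P0 m KL @`
               [set phi | Phi phi /\ (eps%:E <= bl_dist (Pobs phi) Pstar)%E]))%E) ->
  cvg_in_prob0 P (fun N w => bl_dist (Pobs (phihat N w)) Pstar) /\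
  ((forall A, measurable A -> Pstar A = P0 A) ->
   cvg_in_prob0 P (fun N w => bl_dist (Pobs (phihat N w)) P0)).
Proof.
move=> _ _ _ _ subPhi _ inN Hi Hii Hiii Hiv.
set J := Jpop P0 m KL.
set s := ereal_sup (J @` Phi).
set sN := fun N => ereal_sup (J @` PhiN N).
have /fine_cvgP [Hfin Hc] := Hiii.
have sfin : s \is a fin_num.
  case: Hfin => N0 _ HN0.
  by have := HN0 N0 (leqnn N0); rewrite fin_numB => /andP[].
have Hnear : forall eta : R, (0 < eta)%R ->
    \forall N \near \oo, ((fine s - eta)%:E <= sN N)%E.
  move=> eta eta0; move/cvgrPdist_lt : Hc => /(_ eta eta0) Hc.
  near=> N.
  have hf : (s - sN N)%E \is a fin_num by near: N.
  have hd : (`|0 - fine (s - sN N)| < eta)%R by near: N.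
  move: hf hd; rewrite fin_numB => /andP[_ sNf].
  rewrite -(fineK sfin) -(fineK sNf) /= sub0r normrN lee_fin => hd.
  move: hd; rewrite ltr_norml => /andP[? ?]; lra.
have part1 : cvg_in_prob0 P (fun N w => bl_dist (Pobs (phihat N w)) Pstar).
  move=> eps eps0.
  set Se := ereal_sup (J @` [set phi | Phi phi /\ (eps%:E <= bl_dist (Pobs phi) Pstar)%E]).
  have HD := Hiv eps eps0; rewrite -/J -/s -/Se in HD.
  have [eta eta0 Heta] : exists2 eta : R, (0 < eta)%R & (Se < (fine s - 4 * eta)%:E)%E.
    move: HD; rewrite -(fineK sfin); case: Se => [t||] //=.
      rewrite -EFinB lte_fin subr_gt0 => ht.
      exists ((fine s - t) / 5)%R; first by rewrite divr_gt0 // subr_gt0.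
      rewrite lte_fin; lra.
    by move=> _; exists 1%R => //; rewrite ltNyr.
  apply: (@squeeze_cvge _ _ _ _ (fun _ => 0%E) _
     (fun N => outer_prob P [set w | (eta%:E < `|ereal_sup [set `|(Jemp X m KL N w phi - J phi)%E|%E | phi in PhiN N]|)%E]
             + outer_prob P [set w | (eta%:E < `|(ereal_sup (Jemp X m KL N w @` PhiN N) - Jemp X m KL N w (phihat N w))%E|)%E])%E).
  - near=> N.
    have hN : ((fine s - eta)%:E <= sN N)%E by near: N; exact: Hnear.
    rewrite outer_ge0 /=; apply: outer_sub => w /= hw.
    apply: contrapT => /not_orP [/negP h1 /negP h2].
    rewrite /= -leNgt in h1; rewrite /= -leNgt in h2.
    have hk := @key _ _ _ _ _ _ _ _ (inN N w) (le_trans (lee_abs _) h1) h2 hN.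
    have hphi : Phi (phihat N w) := subPhi N _ (inN N w).
    have hd : (eps%:E <= bl_dist (Pobs (phihat N w)) Pstar)%E.
      by apply: ltW; move: hw; rewrite gee0_abs // bl_dist_ge0.
    have : (J (phihat N w) <= Se)%E by apply: ereal_sup_ubound; exists (phihat N w).
    move=> h3; have := le_lt_trans (le_trans hk h3) Heta.
    by rewrite ltxx.
  - exact: cvg_cst.
  - rewrite -[0%E]adde0; apply: cvgeD => //.
      exact: (Hi eta eta0).
    exact: (Hii eta eta0).
split => // hPs.
have -> : (fun N w => bl_dist (Pobs (phihat N w)) P0) =
          (fun N w => bl_dist (Pobs (phihat N w)) Pstar).
  by apply/funext => N; apply/funext => w; apply: bl_dist_congr => A mA; rewrite hPs.
exact: part1.
Unshelve. all: end_near.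
Qed.
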